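(* The span of the parallel adaptive mergesort is $O(\lg^3 n)$ on inputs of size $n$, in the binary-fork-join model.
   Context: Binary-fork-join model: a process may fork two children that run in parallel, the parent resuming when both complete; span is the length of the longest dependence path. The parallel adaptive mergesort splits the input into two halves, sorts them recursively in parallel, and merges the resulting trees with mergeHT: if $T_1$ is empty return $T_2$; if $T_2$ is empty return $T_1$; otherwise let $k$ be the root key of $T_1$ (chosen so that it cuts off at least a constant fraction of the keys of $T_1$ on each side); $(L_2,R_2)=\mathrm{split}(T_2,k)$; $k_1=\max(L_2)$, $k_2=\min(R_2)$; $(L_1,I)=\mathrm{split}(T_1,k_1)$; $(M,R_1)=\mathrm{split}(I,k_2)$; in parallel $T_L=\mathrm{mergeHT}(L_1,L_2)$, $T_R=\mathrm{mergeHT}(R_1,R_2)$; return $\mathrm{join}(\mathrm{join}(T_L,M),T_R)$. Trees are heterogeneous finger search trees, for which $\mathrm{split}$ (into keys less than / greater than a given key) and $\mathrm{join}$ (of two trees with non-interleaving key ranges) take worst-case time $O(\lg\max(|T_1|,|T_2|))$. *)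

(* Defs.v *)
From HB Require Import structures.
From mathcomp Require Import all_boot all_order.
Import Order.TTheory.

Set Implicit Arguments.
Unset Strict Implicit.
Unset Printing Implicit Defensive.

Local Open Scope order_scope.

Definition lg (n : nat) : nat := trunc_log 2 n.

Section Alg.
Context {disp : Order.disp_t} {K : orderType disp}.

(* A tree is represented by (the sequence of) its keys; only its key set
   and size matter for the cost analysis. *)

(* worst-case cost of a split/join whose two trees have sizes a and b:
   c * (lg (max a b) + 1), i.e. O(lg max(|T1|,|T2|)) with constant c. *)
Definition op_cost (c a b : nat) : nat := (c * (lg (maxn a b)).+1)%N.

Definition splitL (T : seq K) (k : K) : seq K := [seq x <- T | x < k].
Definition splitR (T : seq K) (k : K) : seq K := [seq x <- T | k < x].

(* maximum / minimum key of a tree, None for the empty tree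
   (standing for -oo / +oo respectively) *)
Definition tmax (T : seq K) : option K :=
  if T is x :: xs then Some (foldl Order.max x xs) else None.
Definition tmin (T : seq K) : option K :=
  if T is x :: xs then Some (foldl Order.min x xs) else None.

(* split at an optional key: None = -oo for the low split, +oo for the high *)
Definition splitL_lo (T : seq K) (k : option K) : seq K :=
  if k is Some k then splitL T k else [::].
Definition splitR_lo (T : seq K) (k : option K) : seq K :=
  if k is Some k then splitR T k else T.
Definition splitL_hi (T : seq K) (k : option K) : seq K :=
  if k is Some k then splitL T k else T.
Definition splitR_hi (T : seq K) (k : option K) : seq K :=
  if k is Some k then splitR T k else [::].

Definition good_root (d : nat) (T : seq K) (k : K) : Prop :=
  k \in T /\ (d * size (splitL T k) <= (d - 1) * size T)%N
          /\ (d * size (splitR T k) <= (d - 1) * size T)%N.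

(* mspan d c T1 T2 s : some execution of mergeHT(T1,T2) has span s.
   Every constant-time step costs 1 (also fork/join overhead);
   split/join cost op_cost; the two recursive calls run in parallel,
   so their spans combine by max.  The root key is any key allowed by
   good_root (nondeterminism covers every admissible tree shape). *)
Inductive mspan (d c : nat) : seq K -> seq K -> nat -> Prop :=
| ms_nil1 (T2 : seq K) : mspan d c [::] T2 1
| ms_nil2 (T1 : seq K) : T1 != [::] -> mspan d c T1 [::] 1
| ms_node (T1 T2 : seq K) (k : K) (sL sR : nat) :
    T1 != [::] -> T2 != [::] -> good_root d T1 k ->
    mspan d c (splitL_lo T1 (tmax (splitL T2 k))) (splitL T2 k) sL ->
    mspan d c (splitR_hi (splitR_lo T1 (tmax (splitL T2 k))) (tmin (splitR T2 k)))
              (splitR T2 k) sR ->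
    let L2 := splitL T2 k in
    let R2 := splitR T2 k in
    let L1 := splitL_lo T1 (tmax L2) in
    let I := splitR_lo T1 (tmax L2) in
    let M := splitL_hi I (tmin R2) in
    let R1 := splitR_hi I (tmin R2) in
    mspan d c T1 T2
      (1 + op_cost c (size L2) (size R2)
         + op_cost c (size L1) (size I)
         + op_cost c (size M) (size R1)
         + maxn sL sR
         + op_cost c (size L1 + size L2) (size M)
         + op_cost c (size L1 + size L2 + size M) (size R1 + size R2))%N.

(* sspan d c s sp : some execution of the parallel adaptive mergesort on the
   input sequence s has span sp. *)
Inductive sspan (d c : nat) : seq K -> nat -> Prop :=
| ss_base (s : seq K) : (size s <= 1)%N -> sspan d c s 1
| ss_rec (s : seq K) (a b m : nat) :
    (1 < size s)%N ->
    sspan d c (take (size s)./2 s) a ->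
    sspan d c (drop (size s)./2 s) b ->
    mspan d c (take (size s)./2 s) (drop (size s)./2 s) m ->
    sspan d c s (1 + maxn a b + m)%N.

End Alg.

(* Main.v *)
Require Import Defs.
From HB Require Import structures.
From mathcomp Require Import all_boot all_order.
From mathcomp Require Import zify.
Import Order.TTheory.
Set Implicit Arguments.
Local Open Scope order_scope.

Section S.
Context {disp : Order.disp_t} {K : orderType disp}.

Lemma foldl_in (f : K -> K -> K) : (forall x y, f x y = x \/ f x y = y) ->
  forall xs x, foldl f x xs \in x :: xs.
Proof.
move=> Hf; elim=> [|y ys IH] x /=; first by rewrite inE eqxx.
have := IH (f x y); rewrite !inE; case: (Hf x y) => ->.
  by case/orP=> ->; rewrite ?orbT.
by case/orP=> ->; rewrite ?orbT.
Qed.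

Lemma tmax_in (T : seq K) m : tmax T = Some m -> m \in T.
Proof.
case: T => //= x xs [<-]; apply: foldl_in => a b.
rewrite /Order.max; case: ifP; auto.
Qed.

Lemma tmin_in (T : seq K) m : tmin T = Some m -> m \in T.
Proof.
case: T => //= x xs [<-]; apply: foldl_in => a b.
rewrite /Order.min; case: ifP; auto.
Qed.


Lemma cnt_disj (a : K) s :
  (count (fun x : K => (x < a)%O) s + count (fun x : K => (a < x)%O) s <= size s)%N.
Proof. elim: s => //= x s IH; case: ltgtP => /= _; lia. Qed.

Lemma szL1 (T1 T2 : seq K) k :
  (size (splitL_lo T1 (tmax (splitL T2 k))) <= size (splitL T1 k))%N.
Proof.
case E: tmax => [m|] //=.
have := tmax_in _ E; rewrite mem_filter => /andP [mk _].
rewrite /splitL !size_filter; apply: sub_count => x /= xm; exact: lt_trans xm mk.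
Qed.

Lemma szR1 (T1 T2 : seq K) o k :
  (size (splitR_hi (splitR_lo T1 o) (tmin (splitR T2 k))) <= size (splitR T1 k))%N.
Proof.
case E: tmin => [m|] //=.
have := tmin_in _ E; rewrite mem_filter => /andP [km _].
apply: (@leq_trans (size (splitR T1 m))).
  case: o => [a|] //=; rewrite /splitR !size_filter.
  by apply: leq_count_subseq; apply: filter_subseq.
rewrite /splitR !size_filter; apply: sub_count => x /= xm; exact: lt_trans km xm.
Qed.

Lemma szLo (T : seq K) o : (size (splitL_lo T o) <= size T)%N.
Proof. by case: o => //= a; rewrite /splitL size_filter count_size. Qed.
Lemma szRo (T : seq K) o : (size (splitR_lo T o) <= size T)%N.
Proof. by case: o => //= a; rewrite /splitR size_filter count_size. Qed.
Lemma szLh (T : seq K) o : (size (splitL_hi T o) <= size T)%N.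
Proof. by case: o => //= a; rewrite /splitL size_filter count_size. Qed.
Lemma szRh (T : seq K) o : (size (splitR_hi T o) <= size T)%N.
Proof. by case: o => //= a; rewrite /splitR size_filter count_size. Qed.
Lemma szL (T : seq K) k : (size (splitL T k) <= size T)%N.
Proof. by rewrite /splitL size_filter count_size. Qed.
Lemma szR (T : seq K) k : (size (splitR T k) <= size T)%N.
Proof. by rewrite /splitR size_filter count_size. Qed.

Lemma szLM (T : seq K) o o2 :
  (size (splitL_lo T o) + size (splitL_hi (splitR_lo T o) o2) <= size T)%N.
Proof.
apply: (@leq_trans (size (splitL_lo T o) + size (splitR_lo T o))).
  by rewrite leq_add2l szLh.
case: o => [a|] //=; rewrite /splitL /splitR !size_filter; exact: cnt_disj.
Qed.

Lemma op_le c a b N : (a <= N)%N -> (b <= N)%N -> (op_cost c a b <= c * (lg N).+1)%N.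
Proof.
move=> ha hb; rewrite /op_cost leq_mul2l ltnS leq_trunc_log ?orbT //.
by rewrite geq_max ha hb.
Qed.

Lemma mspan_bound d c T1 T2 s : @mspan _ K d c T1 T2 s -> forall t,
  (size T1 * (d-1)^t < d^t)%N ->
  (s <= 1 + t * ((5*c+1) * (lg (size T1 + size T2)).+1))%N.
Proof.
elim=> {T1 T2 s} [T2|T1 _|T1 T2 k sL sR nT1 nT2 [kin [gL gR]] _ IHL _ IHR];
  try by move=> *; rewrite leq_addr.
move=> /= t Ht.
case: t Ht => [|t] Ht.
  by move: nT1 Ht; rewrite expn0 muln1 ltnS leqn0 size_eq0 => /negP.
set L2 := splitL T2 k; set R2 := splitR T2 k.
set L1 := splitL_lo T1 (tmax L2); set I := splitR_lo T1 (tmax L2).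
set M := splitL_hi I (tmin R2); set R1 := splitR_hi I (tmin R2).
set N := (size T1 + size T2)%N.
have hL1 : (size L1 <= size (splitL T1 k))%N by apply: szL1.
have hR1 : (size R1 <= size (splitR T1 k))%N by apply: szR1.
have hL2 : (size L2 <= size T2)%N by apply: szL.
have hR2 : (size R2 <= size T2)%N by apply: szR.
have hL1' : (size L1 <= size T1)%N by apply: szLo.
have hI : (size I <= size T1)%N by apply: szRo.
have hM : (size M <= size I)%N by apply: szLh.
have hR1' : (size R1 <= size I)%N by apply: szRh.
have hLM : (size L1 + size M <= size T1)%N by apply: szLM.
rewrite !expnS in Ht.
have dpos : (0 < d)%N by move: Ht; case: (posnP d) => [->|//]; rewrite mul0n.
have X1 : (size L1 * (d - 1) ^ t < d ^ t)%N.
  move: Ht gL hL1; set X := ((d-1)^t)%N; set Y := (d^t)%N => Ht g1 h1.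
  have e1 : (d * size (splitL T1 k) * X <= (d - 1) * size T1 * X)%N by rewrite leq_mul2r g1 orbT.
  have e2 : (d * (size L1 * X) <= d * size (splitL T1 k) * X)%N.
    by rewrite mulnA leq_mul2r leq_mul2l h1 !orbT.
  rewrite -(ltn_pmul2l dpos).
  apply: (leq_ltn_trans e2); apply: (leq_ltn_trans e1); move: Ht; rewrite mulnCA mulnA //.
have X2 : (size R1 * (d - 1) ^ t < d ^ t)%N.
  move: Ht gR hR1; set X := ((d-1)^t)%N; set Y := (d^t)%N => Ht g1 h1.
  have e1 : (d * size (splitR T1 k) * X <= (d - 1) * size T1 * X)%N by rewrite leq_mul2r g1 orbT.
  have e2 : (d * (size R1 * X) <= d * size (splitR T1 k) * X)%N.
    by rewrite mulnA leq_mul2r leq_mul2l h1 !orbT.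
  rewrite -(ltn_pmul2l dpos).
  apply: (leq_ltn_trans e2); apply: (leq_ltn_trans e1); move: Ht; rewrite mulnCA mulnA //.
have {IHL X1} := IHL _ X1; have {IHR X2} := IHR _ X2.
rewrite -/L2 -/R2 -/L1 -/I -/M -/R1 => IHR IHL.
set B := (5 * c + 1)%N.
have lgL : (lg (size L1 + size L2) <= lg N)%N by apply: leq_trunc_log; lia.
have lgR : (lg (size R1 + size R2) <= lg N)%N by apply: leq_trunc_log; lia.
have o1 := @op_le c (size L2) (size R2) N ltac:(lia) ltac:(lia).
have o2 := @op_le c (size L1) (size I) N ltac:(lia) ltac:(lia).
have o3 := @op_le c (size M) (size R1) N ltac:(lia) ltac:(lia).
have o4 := @op_le c (size L1 + size L2) (size M) N ltac:(lia) ltac:(lia).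
have o5 := @op_le c (size L1 + size L2 + size M) (size R1 + size R2) N ltac:(lia) ltac:(lia).
have sLb : (sL <= 1 + t * (B * (lg N).+1))%N.
  apply: (leq_trans IHL); rewrite leq_add2l leq_mul2l leq_mul2l ltnS lgL; by rewrite !orbT.
have sRb : (sR <= 1 + t * (B * (lg N).+1))%N.
  apply: (leq_trans IHR); rewrite leq_add2l leq_mul2l leq_mul2l ltnS lgR; by rewrite !orbT.
move: o1 o2 o3 o4 o5 sLb sRb; rewrite mulSn /B mulnDl mul1n.
set Q := (lg N).+1; set P := (t * (5 * c * Q + Q))%N.
rewrite -mulnA; set cQ := (c * Q)%N.
have : (1 <= Q)%N by [].
lia.
Qed.

Lemma bern e n : (e^n.+1 + n.+1 * e^n <= (e+1)^n.+1)%N.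
Proof.
elim: n => [|n IH]; first by rewrite !expn1 expn0; lia.
rewrite [(e+1)^n.+2]expnS.
apply: (leq_trans _ (leq_mul (leqnn (e+1)) IH)).
rewrite !expnS; nia.
Qed.

Lemma key d : (2 <= d)%N -> (2 * (d-1) ^ d <= d ^ d)%N.
Proof.
move=> hd; set e := (d - 1)%N; have -> : d = e.+1 by lia.
have := bern e e; rewrite addn1 !expnS.
set X := (e ^ e)%N; set Y := (e.+1 ^ e)%N; nia.
Qed.

Lemma merge_top d c n (T1 T2 : seq K) m : (2 <= d)%N -> mspan d c T1 T2 m ->
  (size T1 <= n)%N -> (size T1 + size T2)%N = n ->
  (m <= 1 + (d * (lg n).+1) * ((5*c+1) * (lg n).+1))%N.
Proof.
move=> hd hm h1 hn; set L := (lg n).+1.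
suff H : (size T1 * (d-1) ^ (d*L) < d ^ (d*L))%N by move: (mspan_bound hm _ H); rewrite hn.
have nL : (n < 2^L)%N by apply: trunc_log_ltn.
have p : (0 < (d-1)^(d*L))%N by rewrite expn_gt0; apply/orP; left; lia.
apply: (@leq_trans (2^L * (d-1)^(d*L))).
  by rewrite ltn_pmul2r //; apply: leq_ltn_trans nL.
rewrite mulnC expnM [X in (_ <= X)%N]expnM -expnMn mulnC leq_exp2r //.
exact: key.
Qed.

Lemma sort_bound d c s sp : (2 <= d)%N -> @sspan _ K d c s sp -> forall j,
  (size s <= 2^j)%N ->
  (sp <= 1 + j * (2 + d * (5*c+1)) * (j+1)^2)%N.
Proof.
move=> hd; elim=> {s sp} [s _|s a b m hs _ IHa _ IHb hm] j hj.
  by rewrite leq_addr.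
case: j hj => [|j] hj; first by move: hs hj; rewrite expn0; lia.
set n := size s in hs hj hm IHa IHb *.
have hh := odd_double_half n; have ho := leq_b1 (odd n).
have e2 : (2 ^ j.+1 = 2 * 2 ^ j)%N by rewrite expnS.
rewrite -muln2 in hh.
have s1 : size (take n./2 s) = n./2 by rewrite size_takel //; lia.
have s2 : size (drop n./2 s) = (n - n./2)%N by rewrite size_drop.
have {}IHa := IHa j ltac:(rewrite s1; lia).
have {}IHb := IHb j ltac:(rewrite s2; lia).
have hmt := @merge_top d c n _ _ m hd hm ltac:(rewrite s1; lia) ltac:(rewrite s1 s2; lia).
have lgn : (lg n <= j.+1)%N.
  by rewrite -[X in (_ <= X)%N](@trunc_expnK 2) // /lg leq_trunc_log.
set B := (5 * c + 1)%N in hmt *; set M := (2 + d * B)%N in IHa IHb *.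
have hm2 : (m <= 1 + d * B * (j.+2 * j.+2))%N.
  apply: (leq_trans hmt); rewrite leq_add2l.
  have hLL : ((lg n).+1 * (lg n).+1 <= j.+2 * j.+2)%N by apply: leq_mul.
  move: hLL; set L := (lg n).+1; set Q := (j.+2 * j.+2)%N; nia.
have q1 : (j * M * (j + 1) ^ 2 <= j * M * (j.+2 * j.+2))%N.
  by rewrite leq_mul2l addn1 leq_mul // orbT.
rewrite (_ : (j.+1 + 1) ^ 2 = j.+2 * j.+2)%N; last by rewrite addn1.
move: IHa IHb hm2 q1; rewrite [(j.+1 * M)%N]mulSn mulnDl {1}/M mulnDl.
set Q := (j.+2 * j.+2)%N; set P := (j * M * (j + 1) ^ 2)%N.
set P' := (j * M * Q)%N; set D := (d * B * Q)%N.
have : (1 <= Q)%N by [].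
lia.
Qed.

End S.

Unset Implicit Arguments.

Theorem lemma10 (disp : Order.disp_t) (K : orderType disp) (d c : nat) :
  (2 <= d)%N ->
  exists C : nat, forall (s : seq K) (sp : nat),
    uniq s -> (2 <= size s)%N -> sspan d c s sp ->
    (sp <= C * (lg (size s)) ^ 3)%N.
Proof.
move=> hd; exists (1 + 18 * (2 + d * (5 * c + 1)))%N => s sp _ hs hsp.
have nl : (size s <= 2 ^ (lg (size s)).+1)%N by apply/ltnW/trunc_log_ltn.
have := sort_bound hd hsp _ nl.
have x1 : (1 <= lg (size s))%N by apply: trunc_log_max.
move: x1; set x := lg (size s); set M := (2 + d * (5 * c + 1))%N.
move=> x1 h.
apply: (leq_trans h).
have e1 : (x.+1 <= 2 * x)%N by lia.
have e2 : ((x.+1 + 1) ^ 2 <= 9 * x ^ 2)%N by rewrite addn1; nia.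
have e3 : (x.+1 * M * (x.+1 + 1) ^ 2 <= (2 * x) * M * (9 * x ^ 2))%N.
  by rewrite leq_mul // leq_mul.
have e4 : (1 <= x ^ 3)%N by rewrite expn_gt0; lia.
apply: (leq_trans (leq_add (leqnn 1) e3)).
rewrite mulnDl mul1n.
have -> : (2 * x * M * (9 * x ^ 2) = 18 * M * x ^ 3)%N.
  by rewrite !expnS expn0; nia.
by rewrite leq_add2r.
Qed.
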